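(* Let $\mathcal{B}=(T,\bowtie)$ be a block of transactions and let $\mathcal S$ be a valid schedule of $\mathcal{B}$. Then the scheduling-graph scheduler $GBR$ run on $\mathcal S$ is sequentially deterministic: there exists a total order $\tau$ of $T$ such that, for every initial global state, every execution of $GBR$ on $\mathcal S$ from that state produces the same result for every transaction and the same final global state as executing the transactions of $T$ one at a time, without concurrency, in the order $\tau$ from that state.
   Context: A block is a finite set $T$ of transactions. Each transaction $tx$ operates on objects of a global state, is deterministic (its effect and returned result depend only on its input parameters and the values it reads), and is associated with a read-set $R(tx)$ and a write-set $W(tx)$ containing all objects it may read, respectively write, in any possible execution. Two distinct transactions $tx_1,tx_2$ conflict, written $tx_1\bowtie tx_2$, if $R(tx_1)\cap W(tx_2)\neq\emptyset$, or $W(tx_1)\cap R(tx_2)\neq\emptyset$, or $W(tx_1)\cap W(tx_2)\neq\emptyset$. A schedule is a set $\mathcal S\subseteq T\times T$ such that the directed graph $(T,\mathcal S)$ is acyclic; it is valid if for every pair $tx\bowtie tx'$ the graph $(T,\mathcal S)$ contains a directed path from $tx$ to $tx'$ or from $tx'$ to $tx$. The scheduler $GBR$ executes a schedule $\mathcal S$ by running each transaction in its own thread; the thread of $tx$ waits until every $tx'$ with $(tx',tx)\in\mathcal S$ has finished executing (signalled only after $tx'$ has completed), then reads the latest version of each object in $R(tx)$, executes $tx$, stores the new values of $W(tx)$, emits the result of $tx$, and signals all $tx''$ with $(tx,tx'')\in\mathcal S$. Transactions not ordered by such waiting may run concurrently. *)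

(* Defs.v *)
From mathcomp Require Import all_boot.
Set Implicit Arguments. Unset Strict Implicit. Unset Printing Implicit Defensive.

(* A block: transactions are the elements of a finite type T; objects of the *)
(* global state live in an eqType O, and hold values of type V; a global     *)
(* state is a map O -> V.  Each transaction t has a finite read-set R t and  *)
(* write-set W t (sequences of objects) and an effect                         *)
(*     eff t : (O -> V) -> (O -> option V) * Res                             *)
(* mapping the state it reads to the updates it performs (Some v = write v,  *)
(* None = no write) together with its result.                               *)

Section Block.
Variables (T : finType) (O : eqType) (V Res : Type).
Variables (R W : T -> seq O) (eff : T -> (O -> V) -> (O -> option V) * Res).

Definition deterministic_tx : Prop :=
  forall t (s1 s2 : O -> V), {in R t, s1 =1 s2} -> eff t s1 = eff t s2.

Definition writes_in_W : Prop :=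
  forall t (s : O -> V) o, o \notin W t -> (eff t s).1 o = None.

Definition conflict (t1 t2 : T) : bool :=
  [&& t1 != t2 &
   [|| has (mem (W t2)) (R t1), has (mem (R t2)) (W t1) | has (mem (W t2)) (W t1)]].

Definition apply_upd (u : O -> option V) (s : O -> V) : O -> V :=
  fun o => odflt (s o) (u o).

Fixpoint seq_run (l : seq T) (s : O -> V) (res : T -> option Res)
  : (O -> V) * (T -> option Res) :=
  match l with
  | [::] => (s, res)
  | t :: l' =>
      let: (u, r) := eff t s in
      seq_run l' (apply_upd u s) (fun t' => if t' == t then Some r else res t')
  end.

Definition seq_exec (l : seq T) (s : O -> V) := seq_run l s (fun _ => None).
End Block.

(* Schedules: S : rel T, S t t' meaning the edge (t, t'). *)
Definition acyclic_sched (T : finType) (S : rel T) : Prop :=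
  forall t t', S t t' -> ~~ connect S t' t.

Definition valid_sched (T : finType) (O : eqType) (R W : T -> seq O) (S : rel T)
  : Prop :=
  forall t1 t2, conflict R W t1 t2 -> connect S t1 t2 || connect S t2 t1.

(* Operational semantics of GBR: one thread per transaction, arbitrary      *)
(* interleaving of the following atomic steps.                               *)
Inductive thread_status (O V Res : Type) :=
| NotStarted
| Reading of (O -> option V)              (* values read so far *)
| Writing of (O -> option V) & Res        (* pending writes, computed result *)
| Done of Res.
Arguments NotStarted {O V Res}.
Arguments Reading {O V Res}.
Arguments Writing {O V Res}.
Arguments Done {O V Res}.

Record config (T : finType) (O V Res : Type) := Config {
  store : O -> V;
  status : T -> thread_status O V Res }.

Section GBR.
Variables (T : finType) (O : eqType) (V Res : Type).
Variables (R W : T -> seq O) (eff : T -> (O -> V) -> (O -> option V) * Res).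
Variable (S : rel T).

Definition upd_status (f : T -> thread_status O V Res) t x :=
  fun t' => if t' == t then x else f t'.

Definition upd_fun (A : eqType) (B : Type) (f : A -> B) (a : A) (b : B) :=
  fun a' => if a' == a then b else f a'.

Definition is_done (x : thread_status O V Res) :=
  if x is Done _ then true else false.

Inductive gbr_step : config T O V Res -> config T O V Res -> Prop :=
| step_start st f t :
    f t = NotStarted ->
    (forall t', S t' t -> is_done (f t')) ->
    gbr_step (Config st f) (Config st (upd_status f t (Reading (fun _ => None))))
| step_read st f t buf o :
    f t = Reading buf -> o \in R t -> buf o = None ->
    gbr_step (Config st f)
      (Config st (upd_status f t (Reading (upd_fun buf o (Some (st o))))))
| step_exec st f t buf :
    f t = Reading buf -> (forall o, o \in R t -> buf o <> None) ->
    gbr_step (Config st f)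
      (Config st (upd_status f t
         (Writing (eff t (fun o => odflt (st o) (buf o))).1
                  (eff t (fun o => odflt (st o) (buf o))).2)))
| step_write st f t pend r o v :
    f t = Writing pend r -> pend o = Some v ->
    gbr_step (Config st f)
      (Config (upd_fun st o v) (upd_status f t (Writing (upd_fun pend o None) r)))
| step_finish st f t pend r :
    f t = Writing pend r -> (forall o, pend o = None) ->
    gbr_step (Config st f) (Config st (upd_status f t (Done r))).

Inductive gbr_steps : config T O V Res -> config T O V Res -> Prop :=
| steps_refl c : gbr_steps c c
| steps_cons c1 c2 c3 : gbr_step c1 c2 -> gbr_steps c2 c3 -> gbr_steps c1 c3.

Definition gbr_init (s0 : O -> V) : config T O V Res :=
  Config s0 (fun _ => NotStarted).

Definition gbr_reachable (s0 : O -> V) (c : config T O V Res) : Prop :=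
  gbr_steps (gbr_init s0) c.

Definition gbr_complete (c : config T O V Res) : Prop :=
  forall t, is_done (status c t).
End GBR.

(* Main.v *)
Require Import Defs.
From mathcomp Require Import all_boot.
Set Implicit Arguments. Unset Strict Implicit. Unset Printing Implicit Defensive.

Section Proof.
Variables (T : finType) (O : eqType) (V Res : Type).
Variables (R W : T -> seq O) (eff : T -> (O -> V) -> (O -> option V) * Res).
Variable (S : rel T).
Hypothesis Hdet : deterministic_tx R eff.
Hypothesis Hw : writes_in_W W eff.
Hypothesis Hacyc : acyclic_sched S.
Hypothesis Hvalid : valid_sched R W S.

Lemma no_cycle a b : connect S a b -> a != b -> ~~ connect S b a.
Proof.
case/connectP => p; case: p => [|z p] /=.
  by move=> _ ->; rewrite eqxx.
move=> /andP [Saz Hp] Hb _; apply/negP => Cba.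
have Cza : connect S z a.
  by apply: connect_trans Cba; apply/connectP; exists p.
by move: (Hacyc Saz); rewrite Cza.
Qed.

Definition h t := #|[pred x | connect S x t]|.

Lemma h_lt a b : connect S a b -> a != b -> h a < h b.
Proof.
move=> Cab Nab; apply: proper_card; apply/properP; split.
  apply/subsetP => x; rewrite !inE => Cxa; exact: connect_trans Cxa Cab.
by exists b; rewrite !inE ?connect0 //; exact: no_cycle.
Qed.

Definition tau := sort (fun a b => h a <= h b) (enum T).

Lemma tau_perm : perm_eq tau (enum T).
Proof. exact/permPl/perm_sort. Qed.

Lemma tau_uniq : uniq tau.
Proof. by rewrite (perm_uniq tau_perm) enum_uniq. Qed.

Lemma tau_mem t : t \in tau.
Proof. by rewrite (perm_mem tau_perm) mem_enum. Qed.

Lemma tau_sorted : sorted (fun a b => h a <= h b) tau.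
Proof. by apply: sort_sorted => a b; apply: leq_total. Qed.

Lemma tau_split l1 x l2 : tau = l1 ++ x :: l2 ->
  [/\ x \notin l1, x \notin l2,
   (forall y, y \in l1 -> ~~ connect S x y) &
   (forall y, y \in l2 -> ~~ connect S y x)].
Proof.
move=> E; have U := tau_uniq; rewrite E cat_uniq in U.
case/and3P: U => _ Hn /= /andP [Nx2 _].
have Nx1 : x \notin l1.
  by apply/negP => Hx; move/negP: Hn; apply; apply/hasP; exists x; rewrite ?inE ?eqxx.
split => // y Hy; apply/negP => C.
- have Nxy : x != y by apply/negP => /eqP Exy; rewrite Exy Hy in Nx1.
  have := h_lt C Nxy.
  have : sorted (fun a b => h a <= h b) [:: y; x].
    have Hs : subseq [:: y; x] tau.
      by rewrite E -[[:: y; x]]/([:: y] ++ [:: x]); apply: cat_subseq; rewrite ?sub1seq ?mem_head.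
    by apply: subseq_sorted Hs tau_sorted => a b c; apply: leq_trans.
  by rewrite /= andbT => Hyx; rewrite ltnNge Hyx.
- have Nxy : y != x by apply/negP => /eqP Exy; rewrite -Exy Hy in Nx2.
  have := h_lt C Nxy.
  have : sorted (fun a b => h a <= h b) [:: x; y].
    have Hs : subseq [:: x; y] tau.
      by rewrite E -[[:: x; y]]/([::] ++ [:: x; y]); apply: cat_subseq; rewrite ?sub0seq //= eqxx sub1seq.
    by apply: subseq_sorted Hs tau_sorted => a b c; apply: leq_trans.
  by rewrite /= andbT => Hyx; rewrite ltnNge Hyx.
Qed.

Definition pre t := take (index t tau) tau.
Definition post t := drop (index t tau).+1 tau.

Lemma tau_pre t : tau = pre t ++ t :: post t.
Proof.
have Ht := tau_mem t.
have Hi : index t tau < size tau by rewrite index_mem.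
rewrite /pre /post -[X in X = _](cat_take_drop (index t tau) tau) (drop_nth t Hi).
by rewrite nth_index.
Qed.

Lemma seq_run_rcons l x s res :
  seq_run eff (rcons l x) s res =
  let p := seq_run eff l s res in
  (apply_upd (eff x p.1).1 p.1, fun t' => if t' == x then Some (eff x p.1).2 else p.2 t').
Proof.
elim: l s res => [|y l IH] s res /=; first by case: (eff x s).
by case: (eff y s) => uu rr; rewrite IH.
Qed.

Definition foldo (e : T -> O -> option V) o (x : V) l :=
  foldl (fun x t => odflt x (e t o)) x l.

Lemma foldo_cat e o x l1 l2 : foldo e o x (l1 ++ l2) = foldo e o (foldo e o x l1) l2.
Proof. exact: foldl_cat. Qed.

Lemma foldo_cons e o x t l : foldo e o x (t :: l) = foldo e o (odflt x (e t o)) l.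
Proof. by []. Qed.

Lemma foldo_none e o x l : (forall t, t \in l -> e t o = None) -> foldo e o x l = x.
Proof.
elim: l x => [|t l IH] x //= H; rewrite /foldo /= H ?mem_head //=.
by apply: IH => t' Ht'; apply: H; rewrite inE Ht' orbT.
Qed.

Lemma foldo_eq e1 e2 o x l : (forall t, t \in l -> e1 t o = e2 t o) ->
  foldo e1 o x l = foldo e2 o x l.
Proof.
elim: l x => [|t l IH] x //= H; rewrite /foldo /= H ?mem_head //=.
by apply: IH => t' Ht'; apply: H; rewrite inE Ht' orbT.
Qed.

Lemma foldl_apply e s l o :
  (foldl (fun s t => apply_upd (e t) s) s l) o = foldo e o (s o) l.
Proof. by elim: l s => [|t l IH] s //=; rewrite IH. Qed.

Lemma u_W t s o v : (eff t s).1 o = Some v -> o \in W t.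
Proof. by move=> E; apply/negPn/negP => H; rewrite Hw in E. Qed.

Definition started (x : thread_status O V Res) := if x is NotStarted then false else true.

Section WithS0.
Variable s0 : O -> V.

Definition inp t := (seq_exec eff (pre t) s0).1.
Definition u t := (eff t (inp t)).1.
Definition r t := (eff t (inp t)).2.

Lemma prefix_run l1 l2 : tau = l1 ++ l2 ->
  foldl (fun s t => apply_upd (u t) s) s0 l1 = (seq_exec eff l1 s0).1 /\
  forall t, (seq_exec eff l1 s0).2 t = if t \in l1 then Some (r t) else None.
Proof.
elim/last_ind: l1 l2 => [|l x IH] l2 E; first by split.
rewrite cat_rcons in E.
have [IH1 IH2] := IH _ E.
have [Nx _ _ _] := tau_split E.
have Ex : inp x = (seq_exec eff l s0).1.
  by rewrite /inp /pre E index_cat (negbTE Nx) /= eqxx addn0 take_size_cat.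
rewrite /seq_exec seq_run_rcons /= foldl_rcons; split.
  by rewrite IH1 /u Ex.
move=> t; rewrite mem_rcons inE; case: eqP => [->|_].
  by rewrite /r Ex.
exact: IH2.
Qed.


Definition eff_upd (f : T -> thread_status O V Res) t o : option V :=
  match f t with
  | Done _ => u t o
  | Writing pend _ => if pend o is None then u t o else None
  | _ => None
  end.

Definition Inv (st : O -> V) (f : T -> thread_status O V Res) : Prop :=
  [/\ (forall t t', S t' t -> started (f t) -> is_done (f t')),
      (forall t buf, f t = Reading buf -> forall o v, buf o = Some v -> v = inp t o),
      (forall t pend rr, f t = Writing pend rr -> rr = r t /\ forall o v, pend o = Some v -> u t o = Some v),
      (forall t rr, f t = Done rr -> rr = r t) &
      (forall o, st o = foldo (eff_upd f) o (s0 o) tau)].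

Lemma eff_upd_cases f t o : eff_upd f t o = u t o \/ eff_upd f t o = None.
Proof. rewrite /eff_upd; case: (f t) => [|b|p rr|rr]; try case: (p o); auto. Qed.

Lemma eff_upd_ns f t o : ~~ started (f t) -> eff_upd f t o = None.
Proof. by rewrite /eff_upd; case: (f t). Qed.

Lemma eff_upd_done f t o : is_done (f t) -> eff_upd f t o = u t o.
Proof. by rewrite /eff_upd; case: (f t). Qed.

Lemma connect_done st f a b : Inv st f -> connect S a b -> a != b ->
  started (f b) -> is_done (f a).
Proof.
case=> I1 _ _ _ _; case/connectP => p; elim: p a => [|z p IH] a /=.
  by move=> _ ->; rewrite eqxx.
case/andP => Saz Hp Hb Nab Hsb.
have [Ezb | Nzb] := eqVneq z b.
  by rewrite -Ezb in Hsb *; exact: (I1 z a Saz Hsb).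
have Hz := IH z Hp Hb Nzb Hsb.
have Hsz : started (f z) by move: Hz; case: (f z).
exact: (I1 z a Saz Hsz).
Qed.

Lemma read_lemma st f t buf o : Inv st f -> f t = Reading buf -> o \in R t ->
  st o = inp t o.
Proof.
move=> I Ht HoR; have I' := I; case: I => I1 _ _ _ I5.
have E := tau_pre t; have [N1 N2 Hpre Hpost] := tau_split E.
have Et : eff_upd f t o = None by rewrite /eff_upd Ht.
rewrite I5 E foldo_cat foldo_cons Et /= foldo_none; last first.
  move=> t2 Ht2; have [Ee|->] := eff_upd_cases f t2 o => //.
  rewrite Ee; case Eu: (u t2 o) => [w|] //; rewrite -Eu -Ee.
  have HoW := u_W Eu.
  have Ntt2 : t != t2 by apply/negP => /eqP Ett; by move: Ht2; rewrite -Ett (negbTE N2).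
  have Cf : conflict R W t t2 by rewrite /conflict Ntt2 /=; apply/orP; left; apply/hasP; exists o.
  have := Hvalid Cf; rewrite (negbTE (Hpost _ Ht2)) orbF => C.
  apply: eff_upd_ns; apply/negP => Hs.
  by have := connect_done I' C Ntt2 Hs; rewrite Ht.
rewrite (@foldo_eq _ u); last first.
  move=> t2 Ht2; have [Ee|Ee] := eff_upd_cases f t2 o; first by [].
  case Eu: (u t2 o) => [w|]; last by rewrite Ee.
  rewrite -Eu; have HoW := u_W Eu.
  have Ntt2 : t2 != t by apply/negP => /eqP Ett; by move: Ht2; rewrite Ett (negbTE N1).
  have Cf : conflict R W t2 t by rewrite /conflict Ntt2 /=; apply/orP; right; apply/orP; left; apply/hasP; exists o.
  have := Hvalid Cf; rewrite (negbTE (Hpre _ Ht2)) orbF => C.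
  by apply: eff_upd_done; apply: (connect_done I' C Ntt2); rewrite Ht.
have [P1 _] := prefix_run E.
by rewrite /inp -P1 foldl_apply.
Qed.


Lemma I1_pres (f f' : T -> thread_status O V Res) :
  (forall t, started (f' t) = started (f t)) ->
  (forall t, is_done (f t) -> is_done (f' t)) ->
  (forall t t', S t' t -> started (f t) -> is_done (f t')) ->
  (forall t t', S t' t -> started (f' t) -> is_done (f' t')).
Proof. by move=> Hs Hd I1 t t' St; rewrite Hs => /(I1 _ _ St) /Hd. Qed.

Lemma upd_started (f : T -> thread_status O V Res) t X :
  started X = started (f t) -> forall t2, started (upd_status f t X t2) = started (f t2).
Proof. by move=> E t2; rewrite /upd_status; case: (eqVneq t2 t) => [->|]. Qed.

Lemma upd_done (f : T -> thread_status O V Res) t X :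
  (is_done (f t) -> is_done X) -> forall t2, is_done (f t2) -> is_done (upd_status f t X t2).
Proof. by move=> E t2; rewrite /upd_status; case: (eqVneq t2 t) => [->|]. Qed.

Lemma I5_same st (f : T -> thread_status O V Res) t X :
  (forall o, eff_upd (fun _ => X) t o = eff_upd f t o) ->
  (forall o, st o = foldo (eff_upd f) o (s0 o) tau) ->
  (forall o, st o = foldo (eff_upd (upd_status f t X)) o (s0 o) tau).
Proof.
move=> E I5 o; rewrite I5; apply: foldo_eq => t2 _.
rewrite {2}/eff_upd /upd_status; case: (eqVneq t2 t) => [->|//].
by rewrite -E.
Qed.

Lemma step_inv c c' : Inv (store c) (status c) -> gbr_step R eff S c c' ->
  Inv (store c') (status c').
Proof.
move=> I Hs; move: I; case: Hs => /=.
- move=> st f t H0 Hpred I; have I' := I; case: I => I1 I2 I3 I4 I5; split.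
  + move=> t2 t' S'; rewrite /upd_status; case: (eqVneq t2 t) => [E2|N2] Hs; first rewrite E2 in S'.
    * case: (eqVneq t' t) => [Et|_]; last exact: Hpred.
      by rewrite Et in S'; move: (Hacyc S'); rewrite connect0.
    * have := I1 _ _ S' Hs; case: (eqVneq t' t) => [->|//]; by rewrite H0.
  + move=> t2 buf; rewrite /upd_status; case: (eqVneq t2 t) => [_ [<-] //|_]; exact: I2.
  + move=> t2 pend rr; rewrite /upd_status; case: (eqVneq t2 t) => [//|_]; exact: I3.
  + move=> t2 rr; rewrite /upd_status; case: (eqVneq t2 t) => [//|_]; exact: I4.
  + by apply: I5_same => // o; rewrite /eff_upd H0.
- move=> st f t buf o Hf HoR Hbo I; have I' := I; case: I => I1 I2 I3 I4 I5; split.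
  + apply: (I1_pres _ _ I1).
      by apply: upd_started; rewrite Hf.
    by apply: upd_done; rewrite Hf.
  + move=> t2 buf'; rewrite /upd_status; case: (eqVneq t2 t) => [->|N] E.
    * case: E => <- o2 v; rewrite /upd_fun; case: (eqVneq o2 o) => [-> [<-]|_].
        exact: (read_lemma I' Hf HoR).
      exact: I2 Hf o2 v.
    * exact: I2 E.
  + move=> t2 pend rr; rewrite /upd_status; case: (eqVneq t2 t) => [//|_]; exact: I3.
  + move=> t2 rr; rewrite /upd_status; case: (eqVneq t2 t) => [//|_]; exact: I4.
  + by apply: I5_same => // o2; rewrite /eff_upd Hf.
- move=> st f t buf Hf Hall I; have I' := I; case: I => I1 I2 I3 I4 I5.
  have Ee : eff t (fun o => odflt (st o) (buf o)) = eff t (inp t).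
    apply: Hdet => o HoR; case Eb: (buf o) => [v|] /=; first by rewrite (I2 _ _ Hf _ _ Eb).
    by case: (Hall o HoR Eb).
  rewrite Ee; split.
  + apply: (I1_pres _ _ I1).
      by apply: upd_started; rewrite Hf.
    by apply: upd_done; rewrite Hf.
  + move=> t2 buf'; rewrite /upd_status; case: (eqVneq t2 t) => [//|_]; exact: I2.
  + move=> t2 pend rr; rewrite /upd_status; case: (eqVneq t2 t) => [-> [<- <-]|_]; last exact: I3.
    by rewrite /r /u; split.
  + move=> t2 rr; rewrite /upd_status; case: (eqVneq t2 t) => [//|_]; exact: I4.
  + apply: I5_same => // o2; rewrite /eff_upd Hf /u /=; by case: ((eff t (inp t)).1 o2).
- move=> st f t pend rr o v Hf Hpo I; have I' := I; case: I => I1 I2 I3 I4 I5.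
  set f' := upd_status f t (Writing (upd_fun pend o None) rr).
  have Huv : u t o = Some v by exact: (I3 _ _ _ Hf).2 _ _ Hpo.
  split.
  + apply: (I1_pres _ _ I1).
      by apply: upd_started; rewrite Hf.
    by apply: upd_done; rewrite Hf.
  + move=> t2 buf'; rewrite /f' /upd_status; case: (eqVneq t2 t) => [//|_]; exact: I2.
  + move=> t2 pend' rr'; rewrite /f' /upd_status; case: (eqVneq t2 t) => [->|_]; last exact: I3.
    case=> <- <-; split; first exact: (I3 _ _ _ Hf).1.
    move=> o2 v2; rewrite /upd_fun; case: (eqVneq o2 o) => [//|_].
    exact: (I3 _ _ _ Hf).2.
  + move=> t2 rr'; rewrite /f' /upd_status; case: (eqVneq t2 t) => [//|_]; exact: I4.
  + move=> o2; rewrite {1}/upd_fun; case: (eqVneq o2 o) => [->|N].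
    * have Et : eff_upd f' t o = Some v.
        by rewrite /eff_upd /f' /upd_status eqxx /upd_fun eqxx.
      have E := tau_pre t; have [N1 N2 Hpre Hpost] := tau_split E.
      rewrite E foldo_cat foldo_cons Et /= foldo_none // => t2 Ht2.
      have Ntt2 : t != t2 by apply/negP => /eqP Ett; move: Ht2; rewrite -Ett (negbTE N2).
      have -> : eff_upd f' t2 o = eff_upd f t2 o.
        by rewrite /eff_upd /f' /upd_status eq_sym (negbTE Ntt2).
      have [Ee|->] := eff_upd_cases f t2 o => //.
      rewrite Ee; case Eu: (u t2 o) => [w|] //; rewrite -Eu -Ee.
      have HoW := u_W Eu.
      have HoWt := u_W Huv.
      have Cf : conflict R W t t2.
        by rewrite /conflict Ntt2 /=; apply/orP; right; apply/orP; right; apply/hasP; exists o.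
      have := Hvalid Cf; rewrite (negbTE (Hpost _ Ht2)) orbF => C.
      apply: eff_upd_ns; apply/negP => Hs.
      by have := connect_done I' C Ntt2 Hs; rewrite Hf.
    * rewrite I5; apply: foldo_eq => t2 _.
      rewrite /eff_upd /f' /upd_status; case: (eqVneq t2 t) => [->|//].
      by rewrite Hf /upd_fun (negbTE N).
- move=> st f t pend rr Hf Hnone I; have I' := I; case: I => I1 I2 I3 I4 I5; split.
  + apply: (I1_pres _ _ I1).
      by apply: upd_started; rewrite Hf.
    by apply: upd_done.
  + move=> t2 buf'; rewrite /upd_status; case: (eqVneq t2 t) => [//|_]; exact: I2.
  + move=> t2 pend' rr'; rewrite /upd_status; case: (eqVneq t2 t) => [//|_]; exact: I3.
  + move=> t2 rr'; rewrite /upd_status; case: (eqVneq t2 t) => [-> [<-]|_]; last exact: I4.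
    exact: (I3 _ _ _ Hf).1.
  + by apply: I5_same => // o2; rewrite /eff_upd Hf Hnone.
Qed.

Lemma steps_inv c c' : Inv (store c) (status c) -> gbr_steps R eff S c c' ->
  Inv (store c') (status c').
Proof.
move=> I H; elim: H I => // c1 c2 c3 Hs _ IH I; apply: IH; exact: step_inv Hs.
Qed.

Lemma init_inv : Inv s0 (fun _ => NotStarted).
Proof.
split => // o; by rewrite foldo_none.
Qed.

End WithS0.

Lemma main :
  exists tau : seq T,
    perm_eq tau (enum T) /\
    forall (s0 : O -> V) (c : config T O V Res),
      gbr_reachable R eff S s0 c -> gbr_complete c ->
      store c =1 (seq_exec eff tau s0).1 /\
      forall t, exists r, status c t = Done r /\ (seq_exec eff tau s0).2 t = Some r.
Proof.
exists tau; split; first exact: tau_perm.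
move=> s0 c Hr Hc.
have [_ _ _ I4 I5] := @steps_inv s0 (gbr_init T Res s0) c (init_inv s0) Hr.
have Et : tau = tau ++ [::] by rewrite cats0.
have [P1 P2] := prefix_run s0 Et.
split.
  move=> o; rewrite I5 -P1 foldl_apply; apply: foldo_eq => t _.
  exact: eff_upd_done.
move=> t; move: (Hc t); case E: (status c t) => [| | |rr] // _.
by exists rr; split => //; rewrite P2 tau_mem (I4 _ _ E).
Qed.

End Proof.

Theorem theorem1 (T : finType) (O : eqType) (V Res : Type)
    (R W : T -> seq O) (eff : T -> (O -> V) -> (O -> option V) * Res)
    (S : rel T) :
  deterministic_tx R eff ->
  writes_in_W W eff ->
  acyclic_sched S ->
  valid_sched R W S ->
  exists tau : seq T,
    perm_eq tau (enum T) /\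
    forall (s0 : O -> V) (c : config T O V Res),
      gbr_reachable R eff S s0 c -> gbr_complete c ->
      store c =1 (seq_exec eff tau s0).1 /\
      forall t, exists r, status c t = Done r /\ (seq_exec eff tau s0).2 t = Some r.
Proof.
move=> Hd Hw Ha Hv; exact: main Hd Hw Ha Hv.
Qed.
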